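(* Let $\bm H_S$ be a finite-dimensional Hilbert space, $\rho$ a density operator on $\bm H_S$, and $\{E_b\}_{b\in B}$ a POVM on $\bm H_S$ with finite outcome set $B$. Put $p(b):=\mathrm{tr}[E_b\rho]$ and, for $p(b)>0$, $\rho_b:=\sqrt{E_b}\,\rho\,\sqrt{E_b}/p(b)$. Let $\bm H_R$ be a finite-dimensional Hilbert space and $|\Psi\rangle\in\bm H_S\otimes\bm H_R$ a purification of $\rho$, i.e. $\mathrm{tr}_R[|\Psi\rangle\langle\Psi|]=\rho$. Define $\rho^R:=\mathrm{tr}_S[|\Psi\rangle\langle\Psi|]$ and, for $p(b)>0$, $\rho^R_b:=\mathrm{tr}_S[(\sqrt{E_b}\otimes I^R)|\Psi\rangle\langle\Psi|(\sqrt{E_b}\otimes I^R)]/p(b)$, where $I^R$ is the identity on $\bm H_R$. Then $$S(\rho)-\sum_b p(b)\,S(\rho_b)=S(\rho^R)-\sum_b p(b)\,S(\rho^R_b),$$ where the sums range over $b$ with $p(b)>0$. That is, the QC-mutual information $I^{S:B}_{\rm QC}$ equals the $\chi$-quantity $\chi^{BR}$ of the ensemble $\{p(b),\rho^R_b\}$.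
   Context: A POVM is a family $\{E_b\}$ of positive operators with $\sum_b E_b=I$. $S(\sigma):=-\mathrm{tr}[\sigma\ln\sigma]$ is the von Neumann entropy (with $0\ln 0=0$). The QC-mutual information is $I^{S:B}_{\rm QC}:=S(\rho)-\sum_b p(b)S(\rho_b)$, and the $\chi$-quantity of an ensemble $\{p(b),\sigma_b\}$ with $\sigma=\sum_b p(b)\sigma_b$ is $S(\sigma)-\sum_b p(b)S(\sigma_b)$; note $\rho^R=\sum_b p(b)\rho^R_b$. *)

(* Defs.v *)
From HB Require Import structures.
From mathcomp Require Import all_boot all_order all_algebra.
From mathcomp Require Import sesquilinear spectral.
From mathcomp Require Import complex mxtens.
From mathcomp Require Import reals exp.

Set Implicit Arguments.
Unset Strict Implicit.
Unset Printing Implicit Defensive.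

Import Order.TTheory GRing.Theory Num.Theory.
Local Open Scope ring_scope.
Local Open Scope complex_scope.

Section Quantum.
Variable R : realType.
Local Notation C := (R[i]).

Definition adj (m n : nat) (A : 'M[C]_(m, n)) : 'M[C]_(n, m) :=
  (map_mx (@Num.conj C) A)^T.

Definition psd (n : nat) (A : 'M[C]_n) : Prop :=
  A \is hermsymmx /\ forall v : 'rV[C]_n, 0 <= (v *m A *m adj v) 0 0.

Definition density (n : nat) (rho : 'M[C]_n) : Prop :=
  psd rho /\ \tr rho = 1.

Definition povm (n : nat) (B : finType) (E : B -> 'M[C]_n) : Prop :=
  (forall b, psd (E b)) /\ \sum_(b : B) E b = 1%:M.

(* Functional calculus for a Hermitian matrix, via its spectral decomposition
   A = P^-1 diag(d) P (P unitary, d real): f(A) = P^-1 diag(f d) P. *)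
Definition mx_fun (f : R -> R) (n : nat) (A : 'M[C]_n) : 'M[C]_n :=
  invmx (spectralmx A)
    *m diag_mx (map_mx (fun z : C => (f (complex.Re z))%:C) (spectral_diag A))
    *m spectralmx A.

Definition msqrt (n : nat) (A : 'M[C]_n) : 'M[C]_n := mx_fun (@Num.sqrt R) A.

Definition xlnx (x : R) : R := if x == 0 then 0 else x * ln x.

Definition vN_entropy (n : nat) (s : 'M[C]_n) : R :=
  - complex.Re (\tr (mx_fun xlnx s)).

(* partial traces on H_S (x) H_R = C^n (x) C^m, indexed as in mxtens *)
Definition ptrR (n m : nat) (X : 'M[C]_(n * m)) : 'M[C]_n :=
  \matrix_(i, j) \sum_(k < m) X (mxtens_index (i, k)) (mxtens_index (j, k)).

Definition ptrS (n m : nat) (X : 'M[C]_(n * m)) : 'M[C]_m :=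
  \matrix_(k, l) \sum_(i < n) X (mxtens_index (i, k)) (mxtens_index (i, l)).

Definition ketbra (d : nat) (psi : 'cV[C]_d) : 'M[C]_d := psi *m adj psi.

End Quantum.

(* Main.v *)
Require Import Defs.
From HB Require Import structures.
From mathcomp Require Import all_boot all_order all_algebra.
From mathcomp Require Import sesquilinear spectral.
From mathcomp Require Import complex mxtens.
From mathcomp Require Import reals exp.
Import Order.TTheory GRing.Theory Num.Theory.
Local Open Scope ring_scope.
Local Open Scope complex_scope.
Section S.
Variable R : realType.
Local Notation C := (R[i]).

Lemma adj_mul m n p (A : 'M[C]_(m,n)) (B : 'M[C]_(n,p)) : adj (A *m B) = adj B *m adj A.
Proof. by rewrite /adj map_mxM trmx_mul. Qed.

Lemma adjK m n (A : 'M[C]_(m,n)) : adj (adj A) = A.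
Proof. by apply/matrixP=> i j; rewrite !mxE conjCK. Qed.

Lemma adjZ m n c (A : 'M[C]_(m,n)) : adj (c *: A) = (Num.conj c) *: adj A.
Proof. by apply/matrixP=> i j; rewrite !mxE rmorphM. Qed.

Lemma adj1 n : adj (1%:M : 'M[C]_n) = 1%:M.
Proof. by apply/matrixP=> i j; rewrite !mxE eq_sym; case: eqP; rewrite ?mulr1n ?mulr0n ?conjC1 ?conjC0. Qed.

Lemma adj_tens m n p q (A : 'M[C]_(m,n)) (B : 'M[C]_(p,q)) : adj (A *t B) = adj A *t adj B.
Proof. by apply/matrixP=> i j; rewrite !mxE rmorphM. Qed.

Lemma herm_adj n (A : 'M[C]_n) : adj A = A -> A \is hermsymmx.
Proof.
move=> hA; apply/is_hermitianmxP; rewrite expr0 scale1r.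
by rewrite -[in LHS]hA /adj map_trmx.
Qed.

Lemma herm_normal n (A : 'M[C]_n) : adj A = A -> A \is normalmx.
Proof. by move/herm_adj/hermitian_normalmx. Qed.



Lemma conjC_real (r : R) : Num.conj (r%:C) = r%:C.
Proof. exact: conjc_real. Qed.

Lemma msqrt_herm n (E : 'M[C]_n) : adj (msqrt E) = msqrt E.
Proof.
rewrite /msqrt /mx_fun invmx_unitary ?spectral_unitarymx //.
set P := spectralmx E; set D := diag_mx _.
have hD : adj D = D.
  apply/matrixP => i j; rewrite /D /adj !mxE eq_sym.
  case: (eqVneq i j) => [->|nij]; rewrite ?mulr1n ?mulr0n ?rmorph0 //.
  by rewrite conjC_real.
rewrite !adj_mul hD mulmxA; congr (_ *m _ *m _).
  by rewrite /adj map_trmx.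
by apply/matrixP => i j; rewrite !mxE conjCK.
Qed.
Lemma tr_mx_fun f n (A : 'M[C]_n) :
  \tr (mx_fun f A) = \sum_i (f (complex.Re (spectral_diag A 0 i)))%:C.
Proof.
rewrite /mx_fun mxtrace_mulC mulmxA mulmxV ?spectral_unit // mul1mx mxtrace_diag.
by apply: eq_bigr => i _; rewrite mxE.
Qed.
Lemma tr_pow n (A : 'M[C]_n) k : A \is normalmx ->
  \tr (A ^+ k) = \sum_i (spectral_diag A 0 i) ^+ k.
Proof.
move=> /orthomx_spectralP hA.
set P := spectralmx A in hA *; set d := spectral_diag A in hA *.
have PU : P \in unitmx by exact: spectral_unit.
suff -> : A ^+ k = invmx P *m diag_mx (\row_i d 0 i ^+ k) *m P.
  by rewrite mxtrace_mulC mulmxA mulmxV // mul1mx mxtrace_diag; apply: eq_bigr => i _; rewrite mxE.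
elim: k => [|k IH].
  have -> : \row_i d 0 i ^+ 0 = const_mx 1 by apply/matrixP => i j; rewrite !mxE expr0.
  by rewrite expr0 diag_const_mx mulmx1 mulVmx.
rewrite exprS -mulmxE IH.
have -> : A *m (invmx P *m diag_mx (\row_i d 0 i ^+ k) *m P) =
   invmx P *m (diag_mx d *m diag_mx (\row_i d 0 i ^+ k)) *m P.
  rewrite {1}hA !mulmxA; congr (_ *m _).
  rewrite -!mulmxA; congr (_ *m (_ *m _)); rewrite !mulmxA mulmxV // mul1mx.
  done.
rewrite mulmx_diag; congr (_ *m diag_mx _ *m _).
by apply/matrixP => i j; rewrite !mxE exprS.
Qed.
Lemma interp (s : seq C) (g : C -> C) : uniq s ->
  exists q : {poly C}, forall x, x \in s -> q.[x] = g x.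
Proof.
move=> us.
pose Pa a := \prod_(t <- s | t != a) ('X - t%:P).
have Pa0 a x : x \in s -> x != a -> (Pa a).[x] = 0.
  move=> xs xa; rewrite /Pa -big_filter horner_prod (bigD1_seq x) /=.
  - by rewrite hornerXsubC subrr mul0r.
  - by rewrite mem_filter xa.
  - exact: filter_uniq.
have Pa1 a : (Pa a).[a] != 0.
  rewrite /Pa horner_prod prodf_seq_neq0; apply/allP => t _; apply/implyP => ta.
  by rewrite hornerXsubC subr_eq0 eq_sym.
exists (\sum_(a <- s) (g a / (Pa a).[a]) *: Pa a) => x xs.
rewrite horner_sum (bigD1_seq x) //= hornerZ divfK // big_seq_cond big1 ?addr0 //.
by move=> a /andP[aS ax]; rewrite hornerZ (Pa0 a x) ?mulr0 // eq_sym.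
Qed.

Lemma trq n (A : 'M[C]_n) (q : {poly C}) : A \is normalmx ->
  (forall i, q.[spectral_diag A 0 i] = (@xlnx R (complex.Re (spectral_diag A 0 i)))%:C) ->
  \tr (mx_fun (@xlnx R) A) = \sum_(k < size q) q`_k * \tr (A ^+ k).
Proof.
move=> nA hq; rewrite tr_mx_fun.
under eq_bigr => i _ do rewrite -hq horner_coef.
rewrite exchange_big /=; apply: eq_bigr => k _.
by rewrite tr_pow // mulr_sumr.
Qed.

Lemma key n n' (A : 'M[C]_n) (A' : 'M[C]_n') : A \is normalmx -> A' \is normalmx ->
  (forall k, \tr (A ^+ k.+1) = \tr (A' ^+ k.+1)) -> vN_entropy A = vN_entropy A'.
Proof.
move=> nA nA' htr.
pose g := fun z : C => (@xlnx R (complex.Re z))%:C.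
pose s := undup (0 :: [seq spectral_diag A 0 i | i <- enum 'I_n] ++
                      [seq spectral_diag A' 0 i | i <- enum 'I_n']).
have [q hq] := interp s g (undup_uniq _).
have q0 : q`_0 = 0.
  rewrite -horner_coef0 hq; first by rewrite /g /xlnx /= eqxx.
  by rewrite mem_undup mem_head.
rewrite /vN_entropy (@trq _ A q nA); last first.
  move=> i; rewrite hq // mem_undup in_cons mem_cat; apply/orP; right; apply/orP; left.
  by apply/mapP; exists i; rewrite ?mem_enum.
rewrite (@trq _ A' q nA'); last first.
  move=> i; rewrite hq // mem_undup in_cons mem_cat; apply/orP; right; apply/orP; right.
  by apply/mapP; exists i; rewrite ?mem_enum.
congr (- complex.Re _); apply: eq_bigr => -[[|k] hk] _ /=.
  by rewrite q0 !mul0r.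
by rewrite htr.
Qed.
Definition Mc {n m} (v : 'cV[C]_(n * m)) : 'M[C]_(n, m) :=
  \matrix_(i, k) v (mxtens_index (i, k)) 0.

Lemma ptrR_ketbra n m (v : 'cV[C]_(n * m)) : ptrR (ketbra v) = Mc v *m adj (Mc v).
Proof.
apply/matrixP => i j; rewrite !mxE; apply: eq_bigr => k _.
by rewrite !mxE big_ord1 !mxE.
Qed.

Lemma ptrS_ketbra n m (v : 'cV[C]_(n * m)) : ptrS (ketbra v) = (Mc v)^T *m adj ((Mc v)^T).
Proof.
apply/matrixP => i j; rewrite !mxE; apply: eq_bigr => k _.
by rewrite !mxE big_ord1 !mxE.
Qed.

Lemma Mc_tens n m (S : 'M[C]_n) (v : 'cV[C]_(n * m)) :
  Mc ((S *t (1%:M : 'M_m)) *m v) = S *m Mc v.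
Proof.
apply/matrixP => i k; rewrite !mxE.
rewrite (reindex (@mxtens_index n m)) /=; last first.
  by exists (@mxtens_unindex n m) => x _; [apply: mxtens_indexK | apply: mxtens_unindexK].
rewrite (eq_bigr (fun p : 'I_n * 'I_m => (S *t (1%:M : 'M_m)) (mxtens_index (i, k)) (mxtens_index (p.1, p.2)) * v (mxtens_index (p.1, p.2)) 0)); last by case.
rewrite -(pair_bigA _ (fun j l => (S *t (1%:M : 'M_m)) (mxtens_index (i, k)) (mxtens_index (j, l)) * v (mxtens_index (j, l)) 0)) /=.
apply: eq_bigr => j _; rewrite (bigD1 k) //= big1 ?addr0.
  by rewrite tensmxE !mxE eqxx mulr1.
by move=> l lk; rewrite tensmxE !mxE eq_sym (negbTE lk) mulr0 mul0r.
Qed.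
Lemma tr_pow_comm m n (X : 'M[C]_(m, n)) (Y : 'M[C]_(n, m)) k :
  \tr ((X *m Y) ^+ k.+1) = \tr ((Y *m X) ^+ k.+1).
Proof.
have -> : (X *m Y) ^+ k.+1 = X *m ((Y *m X) ^+ k) *m Y.
  elim: k => [|k IH]; first by rewrite expr1 expr0 mulmx1.
  by rewrite exprS -mulmxE IH exprS -mulmxE !mulmxA.
rewrite mxtrace_mulC mulmxA exprSr -mulmxE; exact: mxtrace_mulC.
Qed.

Lemma tr_pow_tr n (A : 'M[C]_n) k : \tr ((A^T) ^+ k) = \tr (A ^+ k).
Proof.
have -> : (A^T) ^+ k = (A ^+ k)^T.
  elim: k => [|k IH]; first by rewrite !expr0 trmx1.
  by rewrite exprS IH -mulmxE -trmx_mul mulmxE -exprSr.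
by rewrite mxtrace_tr.
Qed.

Lemma exprZmx n (A : 'M[C]_n) (c : C) k : (c *: A) ^+ k = c ^+ k *: A ^+ k.
Proof.
elim: k => [|k IH]; first by rewrite !expr0 scale1r.
by rewrite !exprS -!mulmxE IH -scalemxAl -scalemxAr scalerA.
Qed.

Lemma ent_eq n m (Y : 'M[C]_(n, m)) (c : R) :
  vN_entropy (c%:C *: (Y *m adj Y)) = vN_entropy (c%:C *: (Y^T *m adj (Y^T))).
Proof.
have hT : Y^T *m adj (Y^T) = (adj Y *m Y)^T.
  by apply/matrixP => i j; rewrite !mxE; apply: eq_bigr => k _; rewrite !mxE mulrC.
apply: key.
- by apply: herm_normal; rewrite adjZ adj_mul adjK conjC_real.
- by apply: herm_normal; rewrite adjZ adj_mul adjK conjC_real.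
move=> k; rewrite !exprZmx !mxtraceZ hT tr_pow_tr tr_pow_comm //.
Qed.
End S.

Theorem theorem4p6 (R : realType) (n m : nat) (B : finType)
  (rho : 'M[R[i]]_n) (E : B -> 'M[R[i]]_n) (Psi : 'cV[R[i]]_(n * m)) :
  density rho -> povm E -> ptrR (ketbra Psi) = rho ->
  let p := fun b => complex.Re (\tr (E b *m rho)) in
  let rho_b := fun b => ((p b)^-1)%:C *: (msqrt (E b) *m rho *m msqrt (E b)) in
  let rhoR := ptrS (ketbra Psi) in
  let rhoR_b := fun b => ((p b)^-1)%:C *:
        ptrS ((msqrt (E b) *t 1%:M) *m ketbra Psi *m (msqrt (E b) *t 1%:M)) in
  vN_entropy rho - \sum_(b | 0 < p b) p b * vN_entropy (rho_b b)
  = vN_entropy rhoR - \sum_(b | 0 < p b) p b * vN_entropy (rhoR_b b).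
Proof.
move=> _ _ hrho p rho_b rhoR rhoR_b.
have e0 : vN_entropy rho = vN_entropy rhoR.
  rewrite /rhoR -hrho ptrR_ketbra ptrS_ketbra.
  have h1 : (1 : R)%:C = 1 by [].
  by have := @ent_eq R _ _ (Mc _ Psi) 1; rewrite h1 !scale1r.
have eb b : vN_entropy (rho_b b) = vN_entropy (rhoR_b b).
  rewrite /rho_b /rhoR_b; set S := msqrt (E b); set c := (p b)^-1.
  have hS : adj S = S by exact: msqrt_herm.
  have hT : adj (S *t (1%:M : 'M_m)) = S *t 1%:M by rewrite adj_tens hS adj1.
  have -> : S *m rho *m S = (S *m Mc _ Psi) *m adj (S *m Mc _ Psi).
    by rewrite -hrho ptrR_ketbra adj_mul hS !mulmxA.
  have -> : (S *t 1%:M) *m ketbra Psi *m (S *t 1%:M) = ketbra ((S *t (1%:M : 'M_m)) *m Psi).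
    by rewrite /ketbra adj_mul hT !mulmxA.
  by rewrite ptrS_ketbra Mc_tens ent_eq.
rewrite e0; congr (_ - _); apply: eq_bigr => b _; by rewrite eb.
Qed.
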